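(* $R(B_2,B_9) \ge 22$; that is, there exists a graph on $21$ vertices containing no copy of $B_2$ whose complement contains no copy of $B_9$.
   Context: For graphs $G,H$, the Ramsey number $R(G,H)$ is the smallest integer $N$ such that every red/blue coloring of the edges of $K_N$ contains a red copy of $G$ (as a subgraph, not necessarily induced) or a blue copy of $H$. The book $B_k$ is the graph on $k+2$ vertices consisting of an edge $uv$ together with $k$ further vertices, each adjacent exactly to $u$ and $v$. *)

(* Defs.v *)
From mathcomp Require Import all_boot.
Set Implicit Arguments. Unset Strict Implicit. Unset Printing Implicit Defensive.

Definition simple_graph (T : finType) (e : rel T) : Prop :=
  symmetric e /\ irreflexive e.

Definition gcompl (T : finType) (e : rel T) : rel T :=
  fun x y => (x != y) && ~~ e x y.

(* The book B_k on vertex set 'I_(k+2): vertices 0 and 1 form the spine uv,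
   the other k vertices are adjacent exactly to 0 and 1. *)
Definition book (k : nat) : rel 'I_(k.+2) :=
  fun i j => (i != j) && ((val i < 2) || (val j < 2)).

Definition contains_copy (S T : finType) (h : rel S) (g : rel T) : Prop :=
  exists f : S -> T, injective f /\ forall x y, h x y -> g (f x) (f y).

(* Main.v *)
Require Import Defs.
From mathcomp Require Import all_boot.

Lemma copy_bound k (T : finType) (g : rel T) :
  contains_copy (@book k) g ->
  exists u v, g u v && (k <= #|[set w | g u w && g v w]|).
Proof.
move=> [f [finj fh]].
pose h (i : 'I_k) : T := f (inord i.+2).
have hinj : injective h.
  move=> i j /finj /(congr1 val) /=.
  rewrite (@inordK k.+1 i.+2) ?ltnS ?ltn_ord // (@inordK k.+1 j.+2) ?ltnS ?ltn_ord //.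
  by move=> [] /val_inj.
exists (f (inord 0)), (f (inord 1)); apply/andP; split.
  by apply: fh; rewrite /book -val_eqE /= !inordK.
rewrite -[X in X <= _](card_ord k) -(card_imset _ hinj).
apply: subset_leq_card; apply/subsetP => _ /imsetP [i _ ->].
rewrite inE; apply/andP; split; apply: fh;
  by rewrite /book -val_eqE /= !inordK ?ltnS ?ltn_ord.
Qed.

Lemma count_card (T : finType) (P : pred T) : count P (enum T) = #|[set w | P w]|.
Proof. rewrite cardsE cardE /enum_mem size_filter /enum_mem count_filter. apply: eq_count => w /=. by rewrite andbT. Qed.

Definition L : seq (seq nat) :=
[:: [:: 3; 4; 6; 8; 11; 16; 17; 18]; [:: 2; 4; 5; 6; 7; 9; 16; 18]; [:: 1; 3; 6; 8; 11; 19; 20]; [:: 0; 2; 7; 9; 10; 12; 18; 19]; [:: 0; 1; 7; 8; 12; 13; 14; 19]; [:: 1; 8; 10; 11; 12; 17; 18; 19]; [:: 0; 1; 2; 10; 12; 13; 15; 17]; [:: 1; 3; 4; 10; 11; 15; 17; 20]; [:: 0; 2; 4; 5; 9; 10; 15; 20]; [:: 1; 3; 8; 11; 13; 14; 15; 17]; [:: 3; 5; 6; 7; 8; 13; 14; 16]; [:: 0; 2; 5; 7; 9; 12; 13; 16]; [:: 3; 4; 5; 6; 11; 14; 15; 20]; [:: 4; 6; 9; 10; 11; 18; 19; 20]; [:: 4; 9; 10; 12; 16; 17]; [:: 6; 7; 8; 9; 12; 16; 18; 19]; [:: 0; 1; 10; 11; 14; 15; 19; 20]; [:: 0; 5; 6;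 7; 9; 14; 19; 20]; [:: 0; 1; 3; 5; 13; 15; 20]; [:: 2; 3; 4; 5; 13; 15; 16; 17]; [:: 2; 7; 8; 12; 13; 16; 17; 18]].

Definition En (u v : nat) := v \in nth [::] L u.
Definition E : rel 'I_21 := fun i j => En i j.

Definition okn k (g : nat -> nat -> bool) := all (fun u => all (fun v => g u v ==> (count (fun w => g u w && g v w) (iota 0 21) < k)) (iota 0 21)) (iota 0 21).

Lemma inI (i : 'I_21) : nat_of_ord i \in iota 0 21.
Proof. by rewrite mem_iota /= add0n ltn_ord. Qed.

Lemma okP k (g : rel 'I_21) (gn : nat -> nat -> bool) :
  (forall i j, g i j = gn i j) -> okn k gn -> ~ contains_copy (@book k) g.
Proof.
move=> hg /allP H /copy_bound [u [v /andP [huv hk]]].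
have /allP Hu := H u (inI _).
have := Hu v (inI _).
rewrite -hg huv implyTb ltnNge -(val_enum_ord 21) count_map.
move: hk; rewrite -count_card.
suff -> : count (fun w : 'I_21 => g u w && g v w) (enum 'I_21) =
  count (preim val (fun w => gn u w && gn v w)) (enum 'I_21) by move=> ->.
by apply: eq_count => w /=; rewrite !hg.
Qed.

Theorem mainTheorem5 :
  exists e : rel 'I_21,
    simple_graph e /\
    ~ contains_copy (@book 2) e /\
    ~ contains_copy (@book 9) (gcompl e).
Proof.
have Hsym : all (fun u => all (fun v => En u v == En v u) (iota 0 21)) (iota 0 21)
  by vm_compute; reflexivity.
have Hirr : all (fun u => ~~ En u u) (iota 0 21) by vm_compute; reflexivity.
have ok2 : okn 2 En by vm_compute; reflexivity.
have ok9 : okn 9 (fun u v => (u != v) && ~~ En u v) by vm_compute; reflexivity.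
exists E; split; [split|split].
- move=> i j; apply/eqP.
  have /allP Hi := allP Hsym i (inI _).
  exact: Hi j (inI _).
- by move=> i; apply/negbTE; exact: (allP Hirr i (inI _)).
- exact: okP ok2.
- exact: okP ok9.
Qed.
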